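(* Let $Z=\{z_n\}_{n\in\mathbb{N}}$ be an almost periodic divisor in a strip $S$, let $S^0$ be a substrip with $\overline{S^0}\subset S$, let $\varepsilon>0$, and let $\tau_1,\tau_2\in E_{\varepsilon,S^0}$. Then there is a bijection $\sigma:\mathbb{N}\to\mathbb{N}$ such that for every $j$ with $z_j\in S^0$ and $\operatorname{dist}(z_j,\partial S^0)>\varepsilon$, $$|z_j+i(\tau_1-\tau_2)-z_{\sigma(j)}|<2\varepsilon,\qquad |z_j-i(\tau_1-\tau_2)-z_{\sigma^{-1}(j)}|<2\varepsilon.$$
   Context: A (vertical) strip is a set $\{z\in\mathbb{C}: a<\operatorname{Re} z<b\}$ with $-\infty\le a<b\le\infty$; a substrip of $S$ is a strip of this form contained in $S$. A divisor in $S$ is a sequence $\{z_j\}\subset S$ without limit points in $S$ (points may repeat finitely often, encoding multiplicity); $|Z|$ denotes its set of points. A set $E\subset\mathbb{R}$ is relatively dense if there is $L<\infty$ with $E\cap[\alpha,\alpha+L]\ne\emptyset$ for every $\alpha\in\mathbb{R}$. For $\varepsilon>0$ and a substrip $S^0$ with $\overline{S^0}\subset S$, $E_{\varepsilon,S^0}$ denotes the set of all $\tau\in\mathbb{R}$ for which there exists a bijection $\sigma=\sigma_\tau:\mathbb{N}\to\mathbb{N}$ such that for every $j$, ($z_j\in S^0$ or $z_{\sigma(j)}\in S^0$) implies $|z_j+i\tau-z_{\sigma(j)}|<\varepsilon$. The divisor $Z$ is almost periodic if $E_{\varepsilon,S^0}$ is relatively dense for every such $\varepsilon$ and $S^0$.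 *)

(* Defs.v *)
From Stdlib Require Import Reals.
From Coquelicot Require Import Coquelicot.
Open Scope R_scope.

Definition strip (a b : Rbar) (z : C) : Prop :=
  Rbar_lt a (Finite (Re z)) /\ Rbar_lt (Finite (Re z)) b.

Definition closed_strip (a b : Rbar) (z : C) : Prop :=
  Rbar_le a (Finite (Re z)) /\ Rbar_le (Finite (Re z)) b.

(* Boundary of the strip {a < Re z < b}: the lines Re z = a, Re z = b
   (only those which are finite). *)
Definition strip_boundary (a b : Rbar) (z : C) : Prop :=
  Finite (Re z) = a \/ Finite (Re z) = b.

(* dist(z, A) > r, with dist the infimum of distances (= +oo if A empty). *)
Definition dist_gt (A : C -> Prop) (z : C) (r : R) : Prop :=
  exists d, r < d /\ forall w, A w -> d <= Cmod (Cminus z w).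

Definition bijN (s : nat -> nat) : Prop :=
  exists t : nat -> nat, (forall n, t (s n) = n) /\ (forall n, s (t n) = n).

(* A divisor in S: a sequence of points of S without limit points in S. *)
Definition divisor_in (S : C -> Prop) (z : nat -> C) : Prop :=
  (forall j, S (z j)) /\
  (forall w, S w -> exists r, 0 < r /\ exists N, forall j, (N <= j)%nat -> r <= Cmod (Cminus (z j) w)).

Definition shiftI (z : C) (tau : R) : C := Cplus z (Cmult Ci (RtoC tau)).

Definition E_set (z : nat -> C) (eps : R) (a0 b0 : Rbar) (tau : R) : Prop :=
  exists s : nat -> nat, bijN s /\
    forall j, (strip a0 b0 (z j) \/ strip a0 b0 (z (s j))) ->
      Cmod (Cminus (shiftI (z j) tau) (z (s j))) < eps.

Definition rel_dense (E : R -> Prop) : Prop :=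
  exists L : R, forall alpha, exists t, E t /\ alpha <= t <= alpha + L.

Definition good_substrip (a b a0 b0 : Rbar) : Prop :=
  Rbar_lt a0 b0 /\ (forall z, closed_strip a0 b0 z -> strip a b z).

Definition almost_periodic_divisor (a b : Rbar) (z : nat -> C) : Prop :=
  divisor_in (strip a b) z /\
  forall eps a0 b0, 0 < eps -> good_substrip a b a0 b0 ->
    rel_dense (E_set z eps a0 b0).

(* Main.v *)
Require Import Defs.
From Stdlib Require Import Reals Lra.
From Coquelicot Require Import Coquelicot.
Open Scope R_scope.

Lemma re_shift (u w : C) (tau : R) : Re (Cminus (shiftI u tau) w) = Re u - Re w.
Proof. destruct u as [p q], w as [x y]; unfold shiftI, Cminus, Cplus, Copp, Cmult, Ci, RtoC; simpl; ring. Qed.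

Lemma shift_eq (x y m : C) (t1 t2 : R) :
  Cminus (shiftI x (t1 - t2)) y = Cminus (Cminus (shiftI x t1) m) (Cminus (shiftI y t2) m).
Proof.
  destruct x as [p q], y as [r s], m as [u v].
  unfold shiftI, Cminus, Cplus, Copp, Cmult, Ci, RtoC; simpl;
  apply injective_projections; simpl; ring.
Qed.

Lemma shift_eq2 (x y m : C) (t1 t2 : R) :
  Cminus (shiftI x (- (t1 - t2))) y = Cminus (Cminus (shiftI x t2) m) (Cminus (shiftI y t1) m).
Proof.
  destruct x as [p q], y as [r s], m as [u v].
  unfold shiftI, Cminus, Cplus, Copp, Cmult, Ci, RtoC; simpl;
  apply injective_projections; simpl; ring.
Qed.

Lemma tri (A B : C) (e : R) : Cmod A < e -> Cmod B < e -> Cmod (Cminus A B) < 2 * e.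
Proof.
  intros HA HB. unfold Cminus. eapply Rle_lt_trans. apply Cmod_triangle.
  rewrite Cmod_opp. lra.
Qed.

Lemma bnd_dist (p q x : R) : Cmod (Cminus (p, q) (x, q)) = Rabs (p - x).
Proof.
  replace (Cminus (p, q) (x, q)) with (RtoC (p - x)).
  - apply Cmod_R.
  - unfold Cminus, Cplus, Copp, RtoC; simpl; apply injective_projections; simpl; ring.
Qed.

Lemma strip_keep (a0 b0 : Rbar) (u w : C) (eps : R) :
  strip a0 b0 u -> dist_gt (strip_boundary a0 b0) u eps ->
  Rabs (Re u - Re w) < eps -> strip a0 b0 w.
Proof.
  intros [H1 H2] [d [Hd Hw]] He. destruct u as [p q]. simpl in *.
  split.
  - destruct a0 as [x| |]; simpl in *; try tauto.
    assert (Hb := Hw (x, q) (or_introl eq_refl)). rewrite bnd_dist in Hb.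
    revert He Hb; unfold Rabs; repeat destruct Rcase_abs; intros; lra.
  - destruct b0 as [x| |]; simpl in *; try tauto.
    assert (Hb := Hw (x, q) (or_intror eq_refl)). rewrite bnd_dist in Hb.
    revert He Hb; unfold Rabs; repeat destruct Rcase_abs; intros; lra.
Qed.

Lemma cm_re (u w : C) (tau e : R) : Cmod (Cminus (shiftI u tau) w) < e -> Rabs (Re u - Re w) < e.
Proof. intros H. rewrite <- re_shift with (tau := tau). eapply Rle_lt_trans; [apply re_le_Cmod|exact H]. Qed.

Theorem lemma1 (a b : Rbar) (z : nat -> C) (a0 b0 : Rbar) (eps tau1 tau2 : R) :
  Rbar_lt a b ->
  almost_periodic_divisor a b z ->
  good_substrip a b a0 b0 ->
  0 < eps ->
  E_set z eps a0 b0 tau1 ->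
  E_set z eps a0 b0 tau2 ->
  exists s t : nat -> nat,
    (forall n, t (s n) = n) /\ (forall n, s (t n) = n) /\
    forall j, strip a0 b0 (z j) -> dist_gt (strip_boundary a0 b0) (z j) eps ->
      Cmod (Cminus (shiftI (z j) (tau1 - tau2)) (z (s j))) < 2 * eps /\
      Cmod (Cminus (shiftI (z j) (- (tau1 - tau2))) (z (t j))) < 2 * eps.
Proof.
  intros _ _ _ Heps [s1 [[t1 [A1 B1]] H1]] [s2 [[t2 [A2 B2]] H2]].
  exists (fun n => t2 (s1 n)), (fun n => t1 (s2 n)).
  split; [intro n; rewrite B2; apply A1|].
  split; [intro n; rewrite B1; apply A2|].
  intros j Hj Hd. split.
  - assert (E1 := H1 j (or_introl Hj)).
    assert (Hs : strip a0 b0 (z (s2 (t2 (s1 j))))).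
    { rewrite B2. eapply strip_keep; eauto. eapply cm_re; eauto. }
    assert (E2 := H2 _ (or_intror Hs)). rewrite B2 in E2.
    rewrite (shift_eq _ _ (z (s1 j))). apply tri; auto.
  - assert (E1 := H2 j (or_introl Hj)).
    assert (Hs : strip a0 b0 (z (s1 (t1 (s2 j))))).
    { rewrite B1. eapply strip_keep; eauto. eapply cm_re; eauto. }
    assert (E2 := H1 _ (or_intror Hs)). rewrite B1 in E2.
    rewrite (shift_eq2 _ _ (z (s2 j))). apply tri; auto.
Qed.
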